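(* Let $\omega$ be a weight function with $\omega(t)=o(t)$ as $t\to\infty$, and let $\{W^x\}_{x>0}$ be its associated weight matrix. Then for every $x>0$, writing $M=W^x$ and $m_k=M_k/k!$, there is $C\ge1$ such that for all $t>0$: $$\omega^*(t)\le C\omega_M^*(t/C)+C,\qquad \omega_M^*(t)\le C\omega^*(t/C)+C,$$ $$\omega^*(t)\le C\omega_m(C/t)+C,\qquad \omega_m(t)\le C\omega^*\!\left(\tfrac{1}{eCt}\right)+C,$$ and in particular $\exp(\omega^*(t))\le\left(\frac{e}{h_m(t/C)}\right)^C$.
   Context: A weight function is a continuous increasing $\omega:[0,\infty)\to[0,\infty)$ with $\omega(0)=0$, $\omega(t)\to\infty$, $\omega(2t)=O(\omega(t))$, $\omega(t)=O(t)$, $\log t=o(\omega(t))$, and $\varphi(t)=\omega(e^t)$ convex; normalized so that $\omega|_{[0,1]}=0$, $\varphi^*(t)=\sup_{s\ge0}(st-\varphi(s))$. Weight matrix: $W^x_k=\exp(\frac1x\varphi^*(xk))$. Conjugate: $\omega^*(t)=\sup_{s\ge0}(\omega(s)-st)$. For a positive sequence $M$ with $M_0=1$: $\omega_M(t)=\sup_k\log(t^k/M_k)$, $h_m(t)=\inf_k m_kt^k$. *)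

(* Defs.v *)
From Stdlib Require Import Reals Arith ClassicalEpsilon.
Open Scope R_scope.

(* Supremum of a set of reals: the least upper bound when the set is
   nonempty and bounded above (junk value 0 otherwise). *)
Definition Rsup (E : R -> Prop) : R :=
  match excluded_middle_informative (bound E /\ exists x, E x) with
  | left H => proj1_sig (completeness E (proj1 H) (proj2 H))
  | right _ => 0
  end.

Definition Rinf (E : R -> Prop) : R := - Rsup (fun y => E (- y)).

Definition phi (omega : R -> R) (t : R) : R := omega (exp t).

(* Weight function (normalized: omega = 0 on [0,1]). Only values on [0,oo) matter. *)
Definition weight_function (omega : R -> R) : Prop :=
  (forall t, 0 < t -> continuity_pt omega t) /\
  (forall s t, 0 <= s -> s <= t -> omega s <= omega t) /\
  (forall t, 0 <= t -> t <= 1 -> omega t = 0) /\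
  (forall K, exists T, forall t, T <= t -> K <= omega t) /\
  (exists L T, 0 < L /\ forall t, T <= t -> omega (2 * t) <= L * omega t) /\
  (exists L T, 0 < L /\ forall t, T <= t -> omega t <= L * t) /\
  (forall eps, 0 < eps -> exists T, forall t, T <= t -> ln t <= eps * omega t) /\
  (forall a b l, 0 <= l <= 1 ->
     phi omega (l * a + (1 - l) * b) <= l * phi omega a + (1 - l) * phi omega b).

Definition little_o_t (omega : R -> R) : Prop :=
  forall eps, 0 < eps -> exists T, forall t, T <= t -> omega t <= eps * t.

Definition phi_star (omega : R -> R) (t : R) : R :=
  Rsup (fun y => exists s, 0 <= s /\ y = s * t - phi omega s).

Definition W (omega : R -> R) (x : R) (k : nat) : R :=
  exp (/ x * phi_star omega (x * INR k)).

Definition omega_star (omega : R -> R) (t : R) : R :=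
  Rsup (fun y => exists s, 0 <= s /\ y = omega s - s * t).

Definition omega_M (M : nat -> R) (t : R) : R :=
  Rsup (fun y => exists k : nat, y = ln (t ^ k / M k)).

Definition omega_M_star (M : nat -> R) (t : R) : R :=
  Rsup (fun y => exists s, 0 <= s /\ y = omega_M M s - s * t).

Definition h_fun (m : nat -> R) (t : R) : R :=
  Rinf (fun y => exists k : nat, y = m k * t ^ k).

(* Main.v *)
Require Import Defs.
From Stdlib Require Import Reals Arith Lra Lia ZArith ClassicalEpsilon.
Open Scope R_scope.

Lemma Rsup_ub (E : R -> Prop) y : bound E -> E y -> y <= Rsup E.
Proof.
  intros Hb Hy. unfold Rsup.
  destruct (excluded_middle_informative _) as [H|H].
  - destruct (completeness E (proj1 H) (proj2 H)) as [m [Hm1 Hm2]]; simpl. now apply Hm1.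
  - exfalso; apply H; split; eauto.
Qed.

Lemma Rsup_lub (E : R -> Prop) b : (exists y, E y) -> (forall y, E y -> y <= b) -> Rsup E <= b.
Proof.
  intros Hne Hb. unfold Rsup.
  destruct (excluded_middle_informative _) as [H|H].
  - destruct (completeness E (proj1 H) (proj2 H)) as [m [Hm1 Hm2]]; simpl. apply Hm2. exact Hb.
  - exfalso; apply H; split; [exists b; exact Hb | exact Hne].
Qed.

Lemma Rdiv_le0 a b : 0 <= a -> 0 < b -> 0 <= a / b.
Proof. intros. unfold Rdiv. apply Rmult_le_pos; auto. left; apply Rinv_0_lt_compat; auto. Qed.

Lemma ln_le' x y : 0 < x -> x <= y -> ln x <= ln y.
Proof. intros Hx Hxy. destruct (Req_dec x y) as [->|Hne]; [lra|].
  left; apply ln_increasing; lra. Qed.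

Lemma exp_le' x y : x <= y -> exp x <= exp y.
Proof. intros H. destruct (Req_dec x y) as [->|Hne]; [lra|]. left; apply exp_increasing; lra. Qed.

Lemma ln_le_sub1 y : 0 < y -> ln y <= y - 1.
Proof. intros Hy. pose proof (exp_ineq1_le (ln y)). rewrite exp_ln in H; lra. Qed.

Lemma ln_div3 a b c : 0 < a -> 0 < b -> 0 < c -> ln (a / (b / c)) = ln a - ln b + ln c.
Proof.
  intros Ha Hb Hc. replace (a / (b / c)) with (a * / b * c) by (field; lra).
  rewrite !ln_mult; try apply Rmult_lt_0_compat; try apply Rinv_0_lt_compat; auto.
  rewrite ln_Rinv; auto; lra.
Qed.

Lemma ln_div2 a b : 0 < a -> 0 < b -> ln (a / b) = ln a - ln b.
Proof.
  intros Ha Hb. unfold Rdiv. rewrite ln_mult, ln_Rinv; auto; try lra.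
  apply Rinv_0_lt_compat; auto.
Qed.

Lemma fact_le_pow k : INR (fact k) <= INR k ^ k.
Proof.
  induction k as [|k IH]; [simpl; lra|].
  replace (fact (S k)) with (S k * fact k)%nat by reflexivity.
  rewrite mult_INR. rewrite <- tech_pow_Rmult.
  assert (INR k ^ k <= INR (S k) ^ k) by (apply pow_incr; split; [apply pos_INR|rewrite S_INR; lra]).
  pose proof (pos_INR k). pose proof (INR_fact_lt_0 k). pose proof (pos_INR (S k)).
  nra.
Qed.

Lemma ln_fact_ge k : INR k * ln (INR k) - INR k <= ln (INR (fact k)).
Proof.
  induction k as [|k IH]; [simpl; rewrite ln_1; lra|].
  replace (fact (S k)) with (S k * fact k)%nat by reflexivity.
  rewrite mult_INR, ln_mult; [|apply lt_0_INR; lia|apply INR_fact_lt_0].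
  assert (Hk : INR k * ln (INR (S k)) - INR k * ln (INR k) <= 1).
  { destruct k as [|k']; [simpl; lra|].
    set (a := INR (S k')) in *. assert (Ha : 0 < a) by (apply lt_0_INR; lia).
    rewrite S_INR. fold a.
    assert (H0 : 0 < (a+1)/a) by (apply Rdiv_lt_0_compat; lra).
    pose proof (ln_le_sub1 ((a+1)/a) H0) as H1.
    rewrite ln_div2 in H1 by lra.
    assert (H2 : a * (ln (a + 1) - ln a) <= a * ((a + 1) / a - 1)) by (apply Rmult_le_compat_l; lra).
    replace (a * ((a + 1) / a - 1)) with 1 in H2 by (field; lra). lra. }
  rewrite S_INR in *.
  replace ((INR k + 1) * ln (INR k + 1)) with (INR k * ln (INR k + 1) + ln (INR k + 1)) by ring. lra.
Qed.

Lemma om_nonneg omega (Hw : weight_function omega) t : 0 <= t -> 0 <= omega t.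
Proof.
  destruct Hw as [_ [Hmono [Hzero _]]]. intros Ht.
  rewrite <- (Hzero 0) by lra. apply Hmono; lra.
Qed.

Lemma phi_nonneg omega (Hw : weight_function omega) s : 0 <= phi omega s.
Proof. unfold phi. apply om_nonneg; auto. left; apply exp_pos. Qed.

Lemma phi_mono omega (Hw : weight_function omega) a b : a <= b -> phi omega a <= phi omega b.
Proof.
  destruct Hw as [_ [Hmono _]]. intros H. unfold phi. apply Hmono.
  left; apply exp_pos. apply exp_le'; auto.
Qed.

Lemma phi_0 omega (Hw : weight_function omega) : phi omega 0 = 0.
Proof. destruct Hw as [_ [_ [Hzero _]]]. unfold phi. rewrite exp_0. apply Hzero; lra. Qed.

Lemma ps_bound omega (Hw : weight_function omega) y : 0 <= y ->
  bound (fun v => exists s, 0 <= s /\ v = s * y - phi omega s).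
Proof.
  intros Hy. pose proof (phi_nonneg omega Hw) as Hpn.
  destruct Hw as [_ [_ [_ [_ [_ [_ [Hlog _]]]]]]].
  destruct (Hlog (/ (y + 1))) as [T HT]. { apply Rinv_0_lt_compat; lra. }
  exists (Rabs (ln T) * y). intros v [s [Hs ->]].
  pose proof (Rabs_pos (ln T)).
  destruct (Rle_lt_dec T (exp s)) as [HTs|HTs].
  - specialize (HT _ HTs). rewrite ln_exp in HT.
    assert (H1 : (y+1) * s <= (y+1) * (/ (y + 1) * omega (exp s))) by (apply Rmult_le_compat_l; lra).
    replace ((y+1) * (/ (y + 1) * omega (exp s))) with (omega (exp s)) in H1 by (field; lra).
    unfold phi. nra.
  - assert (s < ln T). { rewrite <- (ln_exp s). apply ln_increasing; auto. apply exp_pos. }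
    pose proof (Rle_abs (ln T)). specialize (Hpn s). nra.
Qed.

Lemma ps_ge omega (Hw : weight_function omega) y s : 0 <= y -> 0 <= s ->
  s * y - phi omega s <= phi_star omega y.
Proof. intros Hy Hs. unfold phi_star. apply Rsup_ub. apply ps_bound; auto. eauto. Qed.

Lemma ps_nonneg omega (Hw : weight_function omega) y : 0 <= y -> 0 <= phi_star omega y.
Proof.
  intros Hy. pose proof (ps_ge omega Hw y 0 Hy (Rle_refl 0)). rewrite phi_0 in H; auto. lra.
Qed.

Lemma ps_0 omega (Hw : weight_function omega) : phi_star omega 0 = 0.
Proof.
  apply Rle_antisym; [|apply ps_nonneg; auto; lra].
  unfold phi_star. apply Rsup_lub. exists (0 * 0 - phi omega 0). exists 0; split; auto; lra.
  intros v [s [Hs ->]]. pose proof (phi_nonneg omega Hw s). lra.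
Qed.

Lemma three_slope omega (Hw : weight_function omega) a u b : a < u -> u < b ->
  (phi omega u - phi omega a) / (u - a) <= (phi omega b - phi omega u) / (b - u).
Proof.
  intros Hau Hub. destruct Hw as [_ [_ [_ [_ [_ [_ [_ Hconv]]]]]]].
  set (l := (b - u) / (b - a)).
  assert (Hl : 0 <= l <= 1).
  { unfold l; split. apply Rdiv_le0; lra.
    apply (Rmult_le_reg_r (b - a)); [lra|]. field_simplify; lra. }
  specialize (Hconv a b l Hl).
  replace (l * a + (1 - l) * b) with u in Hconv by (unfold l; field; lra).
  set (A := (phi omega u - phi omega a) / (u - a)).
  set (B := (phi omega b - phi omega u) / (b - u)).
  assert (HA : phi omega u - phi omega a = A * (u - a)) by (unfold A; field; lra).
  assert (HB : phi omega b - phi omega u = B * (b - u)) by (unfold B; field; lra).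
  assert (Hc : (b - a) * phi omega u <= (b - u) * phi omega a + (u - a) * phi omega b).
  { assert (H := Rmult_le_compat_l (b - a) _ _ ltac:(lra) Hconv).
    replace ((b - a) * (l * phi omega a + (1 - l) * phi omega b))
      with ((b - u) * phi omega a + (u - a) * phi omega b) in H by (unfold l; field; lra).
    exact H. }
  assert (Hd : (b - u) * (A * (u - a)) <= (u - a) * (B * (b - u))) by nra.
  assert (He : 0 < (b - u) * (u - a)) by nra.
  nra.
Qed.

Lemma subgrad omega (Hw : weight_function omega) x u : 0 < x -> 0 <= u ->
  exists k : nat, phi_star omega (x * INR k) <= x * INR k * u - phi omega u + u * x.
Proof.
  intros Hx Hu.
  set (E := fun v => exists a, a < u /\ v = (phi omega u - phi omega a) / (u - a)).
  assert (HEb : forall v, E v -> v <= (phi omega (u+1) - phi omega u) / (u + 1 - u)).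
  { intros v [a [Ha ->]]. apply three_slope; auto; lra. }
  assert (HEne : E ((phi omega u - phi omega (u-1)) / (u - (u-1)))) by (exists (u-1); split; [lra|auto]).
  set (sg := Rsup E).
  assert (Hsg0 : 0 <= sg).
  { apply Rle_trans with (2 := Rsup_ub E _ ltac:(eexists; exact HEb) HEne).
    apply Rdiv_le0; [|lra]. pose proof (phi_mono omega Hw (u-1) u). lra. }
  assert (Hsub : forall s, phi omega u + (s - u) * sg <= phi omega s).
  { intros s. destruct (Rtotal_order s u) as [Hs|[Hs|Hs]].
    - assert (Hv : (phi omega u - phi omega s) / (u - s) <= sg).
      { apply Rsup_ub. eexists; exact HEb. exists s; split; auto. }
      assert (phi omega u - phi omega s = (phi omega u - phi omega s) / (u - s) * (u - s)) by (field; lra).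
      nra.
    - subst; lra.
    - assert (Hv : sg <= (phi omega s - phi omega u) / (s - u)).
      { apply Rsup_lub. eexists; exact HEne. intros v [a [Ha ->]]. apply three_slope; auto. }
      assert (phi omega s - phi omega u = (phi omega s - phi omega u) / (s - u) * (s - u)) by (field; lra).
      nra. }
  set (r := sg / x).
  assert (Hr : 0 <= r) by (apply Rdiv_le0; lra).
  destruct (archimed r) as [Hup1 Hup2].
  assert (Hpos : (0 < up r)%Z) by (apply lt_0_IZR; lra).
  exists (Z.to_nat (up r - 1)).
  assert (Hk : INR (Z.to_nat (up r - 1)) = IZR (up r) - 1).
  { rewrite INR_IZR_INZ, Z2Nat.id by lia. rewrite minus_IZR. reflexivity. }
  rewrite Hk. set (y := x * (IZR (up r) - 1)).
  assert (Hy1 : y <= sg). { unfold y. assert (x * r = sg) by (unfold r; field; lra). nra. }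
  assert (Hy2 : sg - y <= x). { unfold y. assert (x * r = sg) by (unfold r; field; lra). nra. }
  assert (Hy0 : 0 <= y). { unfold y. assert (1 <= IZR (up r)) by (apply IZR_le; lia). nra. }
  unfold phi_star. apply Rsup_lub. exists (0 * y - phi omega 0). exists 0; split; auto; lra.
  intros v [s [Hs ->]]. specialize (Hsub s).
  destruct (Rle_lt_dec u s).
  - nra.
  - assert ((u - s) * (sg - y) <= u * x) by (apply Rmult_le_compat; lra). nra.
Qed.

Lemma ln_0 : ln 0 = 0.
Proof. unfold ln. case Rlt_dec; intros H. exfalso; apply (Rlt_irrefl _ H). reflexivity. Qed.

Lemma W_pos omega x k : 0 < W omega x k.
Proof. apply exp_pos. Qed.

Lemma ln_W omega x k : ln (W omega x k) = / x * phi_star omega (x * INR k).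
Proof. unfold W. apply ln_exp. Qed.

Lemma W_0 omega (Hw : weight_function omega) x : W omega x 0 = 1.
Proof. unfold W. replace (x * INR 0) with 0 by (simpl; ring). rewrite ps_0 by auto. rewrite Rmult_0_r. apply exp_0. Qed.

Lemma ln_s_le omega (Hw : weight_function omega) x k s : 0 < x -> 1 <= s ->
  INR k * ln s - omega s / x <= / x * phi_star omega (x * INR k).
Proof.
  intros Hx Hs. assert (Hl : 0 <= ln s) by (rewrite <- ln_1; apply ln_le'; lra).
  pose proof (ps_ge omega Hw (x * INR k) (ln s)) as H.
  assert (0 <= x * INR k) by (pose proof (pos_INR k); nra).
  specialize (H ltac:(lra) Hl). unfold phi in H. rewrite exp_ln in H by lra.
  assert (Hi : 0 < / x) by (apply Rinv_0_lt_compat; lra).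
  assert (H2 := Rmult_le_compat_l (/ x) _ _ (Rlt_le _ _ Hi) H).
  replace (/ x * (ln s * (x * INR k) - omega s)) with (INR k * ln s - omega s / x) in H2 by (field; lra).
  exact H2.
Qed.

Lemma oM_elem_le omega (Hw : weight_function omega) x k s : 0 < x -> 0 <= s ->
  ln (s ^ k / W omega x k) <= omega s / x.
Proof.
  intros Hx Hs. pose proof (om_nonneg omega Hw s Hs) as Hn.
  assert (0 <= omega s / x) by (apply Rdiv_le0; lra).
  destruct (Req_dec s 0) as [->|Hs0].
  - destruct k as [|k]. simpl. rewrite W_0; auto. replace (1/1) with 1 by field. rewrite ln_1; lra.
    simpl. rewrite Rmult_0_l. unfold Rdiv. rewrite Rmult_0_l, ln_0. lra.
  - rewrite ln_div2, ln_pow, ln_W; try lra; try apply pow_lt; try apply W_pos; try lra.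
    destruct (Rle_lt_dec 1 s).
    + pose proof (ln_s_le omega Hw x k s Hx r). lra.
    + pose proof (proj1 (proj2 (proj2 Hw))) as Hzero. rewrite (Hzero s) by lra.
      assert (ln s <= 0) by (rewrite <- ln_1; apply ln_le'; lra).
      pose proof (pos_INR k).
      assert (0 <= / x * phi_star omega (x * INR k)).
      { apply Rmult_le_pos. left; apply Rinv_0_lt_compat; lra. apply ps_nonneg; auto; nra. }
      replace (0 / x) with 0 by (field; lra). nra.
Qed.

Lemma oM_bound omega (Hw : weight_function omega) x s : 0 < x -> 0 <= s ->
  bound (fun y => exists k : nat, y = ln (s ^ k / W omega x k)).
Proof. intros Hx Hs. exists (omega s / x). intros y [k ->]. apply oM_elem_le; auto. Qed.

Lemma oM_le omega (Hw : weight_function omega) x s : 0 < x -> 0 <= s ->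
  omega_M (W omega x) s <= omega s / x.
Proof.
  intros Hx Hs. unfold omega_M. apply Rsup_lub. exists (ln (s ^ 0 / W omega x 0)); eauto.
  intros y [k ->]. apply oM_elem_le; auto.
Qed.

Lemma oM_ge_elem omega (Hw : weight_function omega) x s k : 0 < x -> 0 <= s ->
  ln (s ^ k / W omega x k) <= omega_M (W omega x) s.
Proof. intros Hx Hs. unfold omega_M. apply Rsup_ub. apply oM_bound; auto. eauto. Qed.

Lemma oM_nonneg omega (Hw : weight_function omega) x s : 0 < x -> 0 <= s ->
  0 <= omega_M (W omega x) s.
Proof.
  intros Hx Hs. pose proof (oM_ge_elem omega Hw x s 0 Hx Hs) as H.
  simpl in H. rewrite W_0 in H; auto. replace (1/1) with 1 in H by field. rewrite ln_1 in H. exact H.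
Qed.

Lemma oM_ge omega (Hw : weight_function omega) x s : 0 < x -> 1 <= s ->
  omega s - x * ln s <= x * omega_M (W omega x) s.
Proof.
  intros Hx Hs. assert (Hl : 0 <= ln s) by (rewrite <- ln_1; apply ln_le'; lra).
  destruct (subgrad omega Hw x (ln s) Hx Hl) as [k Hk].
  unfold phi in Hk. rewrite exp_ln in Hk by lra.
  pose proof (oM_ge_elem omega Hw x s k Hx ltac:(lra)) as H.
  rewrite ln_div2, ln_pow, ln_W in H; try lra; try apply pow_lt; try apply W_pos; try lra.
  assert (Hi : 0 < / x) by (apply Rinv_0_lt_compat; lra).
  assert (H2 := Rmult_le_compat_l (/ x) _ _ (Rlt_le _ _ Hi) Hk).
  replace (/ x * (x * INR k * ln s - omega s + ln s * x)) with (INR k * ln s - omega s / x + ln s) in H2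
    by (field; lra).
  assert (H3 : omega s / x - ln s <= omega_M (W omega x) s) by lra.
  assert (H4 := Rmult_le_compat_l x _ _ (Rlt_le _ _ Hx) H3).
  replace (x * (omega s / x - ln s)) with (omega s - x * ln s) in H4 by (field; lra). exact H4.
Qed.

Lemma oM_key omega (Hw : weight_function omega) x : 0 < x ->
  exists D, 0 <= D /\ forall s, 0 <= s -> omega s <= 2 * x * omega_M (W omega x) s + D.
Proof.
  intros Hx. pose proof (proj1 (proj2 Hw)) as Hmono.
  pose proof (proj1 (proj2 (proj2 (proj2 (proj2 (proj2 (proj2 Hw))))))) as Hlog.
  destruct (Hlog (/ (2 * x))) as [T HT]. { apply Rinv_0_lt_compat; lra. }
  set (T' := Rmax T 1).
  exists (omega T'). split. apply om_nonneg; auto. unfold T'; pose proof (Rmax_r T 1); lra.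
  intros s Hs. pose proof (oM_nonneg omega Hw x s Hx Hs).
  destruct (Rle_lt_dec T' s) as [HTs|HTs].
  - assert (H1 : 1 <= s) by (unfold T' in HTs; pose proof (Rmax_r T 1); lra).
    assert (H2 : T <= s) by (unfold T' in HTs; pose proof (Rmax_l T 1); lra).
    specialize (HT s H2). pose proof (oM_ge omega Hw x s Hx H1).
    assert (H3 := Rmult_le_compat_l (2 * x) _ _ ltac:(lra) HT).
    replace (2 * x * (/ (2 * x) * omega s)) with (omega s) in H3 by (field; lra).
    assert (0 <= omega T') by (apply om_nonneg; auto; unfold T'; pose proof (Rmax_r T 1); lra).
    replace (2 * x * ln s) with (2 * (x * ln s)) in H3 by ring.
    replace (2 * x * omega_M (W omega x) s) with (2 * (x * omega_M (W omega x) s)) by ring.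
    lra.
  - assert (omega s <= omega T') by (apply Hmono; lra). nra.
Qed.

Lemma os_bound omega (Hw : weight_function omega) (Ho : little_o_t omega) t : 0 < t ->
  bound (fun y => exists s, 0 <= s /\ y = omega s - s * t).
Proof.
  intros Ht. pose proof (proj1 (proj2 Hw)) as Hmono.
  destruct (Ho t Ht) as [T HT]. set (T' := Rmax T 0).
  assert (0 <= T') by (unfold T'; apply Rmax_r).
  exists (omega T'). intros y [s [Hs ->]].
  pose proof (om_nonneg omega Hw T' ltac:(lra)).
  destruct (Rle_lt_dec T' s) as [HTs|HTs].
  - assert (T <= s) by (unfold T' in HTs; pose proof (Rmax_l T 0); lra).
    specialize (HT s H1). nra.
  - assert (omega s <= omega T') by (apply Hmono; lra). nra.
Qed.

Lemma os_ge omega (Hw : weight_function omega) (Ho : little_o_t omega) t s : 0 < t -> 0 <= s ->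
  omega s - s * t <= omega_star omega t.
Proof. intros. unfold omega_star. apply Rsup_ub. apply os_bound; auto. eauto. Qed.

Lemma os_nonneg omega (Hw : weight_function omega) (Ho : little_o_t omega) t : 0 < t ->
  0 <= omega_star omega t.
Proof.
  intros Ht. pose proof (os_ge omega Hw Ho t 0 Ht (Rle_refl 0)).
  rewrite (proj1 (proj2 (proj2 Hw)) 0) in H by lra. lra.
Qed.

Lemma oMs_bound omega (Hw : weight_function omega) (Ho : little_o_t omega) x t : 0 < x -> 0 < t ->
  bound (fun y => exists s, 0 <= s /\ y = omega_M (W omega x) s - s * t).
Proof.
  intros Hx Ht. exists (omega_star omega (x * t) / x). intros y [s [Hs ->]].
  pose proof (oM_le omega Hw x s Hx Hs).
  pose proof (os_ge omega Hw Ho (x * t) s ltac:(nra) Hs).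
  assert (Hi : 0 < / x) by (apply Rinv_0_lt_compat; lra).
  assert (H2 := Rmult_le_compat_l (/ x) _ _ (Rlt_le _ _ Hi) H0).
  replace (/ x * (omega s - s * (x * t))) with (omega s / x - s * t) in H2 by (field; lra).
  unfold Rdiv in *. lra.
Qed.

Lemma oMs_ge omega (Hw : weight_function omega) (Ho : little_o_t omega) x t s : 0 < x -> 0 < t -> 0 <= s ->
  omega_M (W omega x) s - s * t <= omega_M_star (W omega x) t.
Proof. intros. unfold omega_M_star. apply Rsup_ub. apply oMs_bound; auto. eauto. Qed.

Lemma om_elem_le omega (Hw : weight_function omega) (Ho : little_o_t omega) x t tau k :
  0 < x -> 0 < t -> 0 < tau -> exp 1 * t * tau <= x ->
  ln (t ^ k / (W omega x k / INR (fact k))) <= omega_star omega tau / x.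
Proof.
  intros Hx Ht Htau Hc.
  pose proof (os_nonneg omega Hw Ho tau Htau) as HO.
  assert (HOx : 0 <= omega_star omega tau / x) by (apply Rdiv_le0; lra).
  destruct k as [|k'].
  { simpl. rewrite W_0 by auto. replace (1 / (1 / 1)) with 1 by field. rewrite ln_1. lra. }
  set (k := S k') in *.
  assert (HK : 0 < INR k) by (apply lt_0_INR; unfold k; lia).
  rewrite ln_div3, ln_pow, ln_W; try apply pow_lt; try apply W_pos; try apply INR_fact_lt_0; try lra.
  assert (Hf : ln (INR (fact k)) <= INR k * ln (INR k)).
  { rewrite <- ln_pow by lra. apply ln_le'. apply INR_fact_lt_0. apply fact_le_pow. }
  set (s := exp 1 * INR k * t).
  assert (Hs0 : 0 < s) by (unfold s; pose proof (exp_pos 1); apply Rmult_lt_0_compat; [nra|lra]).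
  assert (Hls : ln s = 1 + ln (INR k) + ln t).
  { unfold s. rewrite !ln_mult, ln_exp; try lra; try apply exp_pos.
    apply Rmult_lt_0_compat; [apply exp_pos|lra]. }
  destruct (Rle_lt_dec 1 s) as [H1|H1].
  - pose proof (ln_s_le omega Hw x k s Hx H1) as H2.
    pose proof (os_ge omega Hw Ho tau s Htau ltac:(lra)) as H3.
    assert (H4 : s * tau <= INR k * x).
    { unfold s. replace (exp 1 * INR k * t * tau) with (INR k * (exp 1 * t * tau)) by ring.
      apply Rmult_le_compat_l; lra. }
    assert (H5 : omega s / x <= omega_star omega tau / x + INR k).
    { assert (Hi : 0 < / x) by (apply Rinv_0_lt_compat; lra).
      assert (H6 : omega s <= omega_star omega tau + INR k * x) by lra.
      assert (H7 := Rmult_le_compat_l (/ x) _ _ (Rlt_le _ _ Hi) H6).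
      replace (/ x * (omega_star omega tau + INR k * x)) with (omega_star omega tau / x + INR k) in H7
        by (field; lra).
      unfold Rdiv in *. lra. }
    rewrite Hls in H2.
    replace (INR k * (1 + ln (INR k) + ln t)) with (INR k + INR k * ln (INR k) + INR k * ln t) in H2 by ring.
    lra.
  - assert (0 <= / x * phi_star omega (x * INR k)).
    { apply Rmult_le_pos. left; apply Rinv_0_lt_compat; lra. apply ps_nonneg; auto; nra. }
    assert (ln s < 0) by (rewrite <- ln_1; apply ln_increasing; lra).
    rewrite Hls in H0.
    assert (INR k * (ln (INR k) + ln t) < 0) by nra.
    lra.
Qed.

Lemma om_bound omega (Hw : weight_function omega) (Ho : little_o_t omega) x t : 0 < x -> 0 < t ->
  bound (fun y => exists k : nat, y = ln (t ^ k / (fun k => W omega x k / INR (fact k)) k)).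
Proof.
  intros Hx Ht. exists (omega_star omega (x / (exp 1 * t)) / x). intros y [k ->].
  pose proof (exp_pos 1).
  apply om_elem_le; auto. apply Rdiv_lt_0_compat; auto. apply Rmult_lt_0_compat; auto.
  right; field; lra.
Qed.

Lemma om_ge_elem omega (Hw : weight_function omega) (Ho : little_o_t omega) x t k : 0 < x -> 0 < t ->
  ln (t ^ k / (W omega x k / INR (fact k))) <= omega_M (fun k => W omega x k / INR (fact k)) t.
Proof.
  intros Hx Ht. unfold omega_M. apply Rsup_ub. apply om_bound; auto. exists k. reflexivity.
Qed.

Lemma omm_nonneg omega (Hw : weight_function omega) (Ho : little_o_t omega) x t : 0 < x -> 0 < t ->
  0 <= omega_M (fun k => W omega x k / INR (fact k)) t.
Proof.
  intros Hx Ht. pose proof (om_ge_elem omega Hw Ho x t 0 Hx Ht) as H.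
  simpl in H. rewrite W_0 in H by auto. replace (1 / (1 / 1)) with 1 in H by field. rewrite ln_1 in H. exact H.
Qed.

Lemma line3_inner omega (Hw : weight_function omega) (Ho : little_o_t omega) x C t s :
  0 < x -> 2 * x <= C -> 0 < t -> 0 < s ->
  omega_M (W omega x) s <= s * t / (2 * x) + omega_M (fun k => W omega x k / INR (fact k)) (C / t).
Proof.
  intros Hx HC Ht Hs. unfold omega_M at 1. apply Rsup_lub.
  exists (ln (s ^ 0 / W omega x 0)); eauto.
  intros y [k ->].
  assert (HCt : 0 < C / t) by (apply Rdiv_lt_0_compat; lra).
  pose proof (om_ge_elem omega Hw Ho x (C / t) k Hx HCt) as H.
  rewrite ln_div3, ln_pow in H; try apply pow_lt; try apply W_pos; try apply INR_fact_lt_0; try lra.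
  rewrite ln_div2, ln_pow; try apply pow_lt; try apply W_pos; try lra.
  set (b := t / (2 * x)). assert (Hb : 0 < b) by (unfold b; apply Rdiv_lt_0_compat; lra).
  replace (s * t / (2 * x)) with (s * b) by (unfold b; field; lra).
  pose proof (ln_fact_ge k) as Hf.
  assert (Hlc : ln (2 * x / t) <= ln (C / t)).
  { apply ln_le'. apply Rdiv_lt_0_compat; lra. unfold Rdiv. apply Rmult_le_compat_r; [|lra].
    left; apply Rinv_0_lt_compat; lra. }
  assert (Hkey : INR k * ln s <= s * b - INR k + INR k * ln (INR k) + INR k * ln (2 * x / t)).
  { destruct k as [|k'].
    - simpl. rewrite Rmult_0_l. nra.
    - set (K := INR (S k')) in *. assert (HK : 0 < K) by (apply lt_0_INR; lia).
      assert (H0 : 0 < s * b / K) by (apply Rdiv_lt_0_compat; nra).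
      pose proof (ln_le_sub1 _ H0) as H1.
      rewrite ln_div2, ln_mult in H1; try nra.
      assert (Hb2 : ln b = - ln (2 * x / t)).
      { unfold b. rewrite <- ln_Rinv. f_equal. field; lra. apply Rdiv_lt_0_compat; lra. }
      rewrite Hb2 in H1.
      assert (H2 := Rmult_le_compat_l K _ _ (Rlt_le _ _ HK) H1).
      replace (K * (s * b / K - 1)) with (s * b - K) in H2 by (field; lra).
      replace (K * (ln s + - ln (2 * x / t) - ln K)) with (K * ln s - K * ln (2 * x / t) - K * ln K) in H2 by ring.
      lra. }
  assert (INR k * ln (2 * x / t) <= INR k * ln (C / t)) by (apply Rmult_le_compat_l; [apply pos_INR|lra]).
  lra.
Qed.

Lemma h_lemma omega (Hw : weight_function omega) (Ho : little_o_t omega) x tau : 0 < x -> 0 < tau ->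
  0 < h_fun (fun k => W omega x k / INR (fact k)) tau /\
  omega_M (fun k => W omega x k / INR (fact k)) (/ tau) <= - ln (h_fun (fun k => W omega x k / INR (fact k)) tau).
Proof.
  intros Hx Htau.
  set (a := omega_M (fun k => W omega x k / INR (fact k)) (/ tau)).
  assert (Hit : 0 < / tau) by (apply Rinv_0_lt_compat; lra).
  assert (Hmpos : forall k, 0 < W omega x k / INR (fact k) * tau ^ k).
  { intros k. apply Rmult_lt_0_compat. apply Rdiv_lt_0_compat. apply W_pos. apply INR_fact_lt_0.
    apply pow_lt; lra. }
  assert (Hel : forall k, ln ((/ tau) ^ k / (W omega x k / INR (fact k))) = - ln (W omega x k / INR (fact k) * tau ^ k)).
  { intros k. rewrite <- ln_Rinv by apply Hmpos. f_equal. rewrite pow_inv.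
    pose proof (INR_fact_lt_0 k). pose proof (W_pos omega x k). pose proof (pow_lt tau k Htau).
    field; repeat split; lra. }
  assert (Hlow : forall k, exp (- a) <= W omega x k / INR (fact k) * tau ^ k).
  { intros k. pose proof (om_ge_elem omega Hw Ho x (/ tau) k Hx Hit) as H. fold a in H. rewrite Hel in H.
    rewrite <- (exp_ln (W omega x k / INR (fact k) * tau ^ k)) by apply Hmpos. apply exp_le'. lra. }
  set (F := fun y => (fun y => exists k : nat, y = W omega x k / INR (fact k) * tau ^ k) (- y)).
  assert (HFb : forall y, F y -> y <= - exp (- a)).
  { intros y [k Hk]. specialize (Hlow k). lra. }
  assert (HFne : F (- (W omega x 0 / INR (fact 0) * tau ^ 0))).
  { exists 0%nat. ring. }
  assert (Hh1 : exp (- a) <= h_fun (fun k => W omega x k / INR (fact k)) tau).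
  { unfold h_fun, Rinf. fold F. pose proof (Rsup_lub F _ (ex_intro _ _ HFne) HFb). lra. }
  pose proof (exp_pos (- a)).
  split; [lra|].
  set (h := h_fun (fun k => W omega x k / INR (fact k)) tau) in *.
  assert (Hh2 : forall k, h <= W omega x k / INR (fact k) * tau ^ k).
  { intros k. assert (HF : F (- (W omega x k / INR (fact k) * tau ^ k))) by (exists k; ring).
    pose proof (Rsup_ub F _ (ex_intro _ _ HFb) HF). unfold h, h_fun, Rinf. fold F. lra. }
  unfold a, omega_M. apply Rsup_lub. exists (ln ((/ tau) ^ 0 / (W omega x 0 / INR (fact 0)))); eauto.
  intros y [k ->]. rewrite Hel. specialize (Hh2 k).
  assert (ln h <= ln (W omega x k / INR (fact k) * tau ^ k)) by (apply ln_le'; lra). lra.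
Qed.

Theorem corollary3p11 (omega : R -> R)
  (Hw : weight_function omega) (Ho : little_o_t omega) :
  forall x : R, 0 < x ->
  exists C : R, 1 <= C /\
    forall t : R, 0 < t ->
      omega_star omega t <= C * omega_M_star (W omega x) (t / C) + C /\
      omega_M_star (W omega x) t <= C * omega_star omega (t / C) + C /\
      omega_star omega t
        <= C * omega_M (fun k => W omega x k / INR (fact k)) (C / t) + C /\
      omega_M (fun k => W omega x k / INR (fact k)) t
        <= C * omega_star omega (/ (exp 1 * C * t)) + C /\
      exp (omega_star omega t)
        <= Rpower (exp 1 / h_fun (fun k => W omega x k / INR (fact k)) (t / C)) C.
Proof.
  intros x Hx.
  destruct (oM_key omega Hw x Hx) as [D [HD0 HD]].
  set (C := Rmax (Rmax 1 (2 * x)) (Rmax D (/ x))).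
  assert (HC1 : 1 <= C) by (unfold C; eapply Rle_trans; [apply Rmax_l|apply Rmax_l]).
  assert (HC2 : 2 * x <= C) by (unfold C; eapply Rle_trans; [apply Rmax_r|apply Rmax_l]).
  assert (HC3 : D <= C) by (unfold C; eapply Rle_trans; [apply Rmax_l|apply Rmax_r]).
  assert (HC4 : / x <= C) by (unfold C; eapply Rle_trans; [apply Rmax_r|apply Rmax_r]).
  assert (HCx : 1 <= C * x).
  { assert (H := Rmult_le_compat_r x _ _ (Rlt_le _ _ Hx) HC4). rewrite Rinv_l in H; lra. }
  pose proof (proj1 (proj2 (proj2 Hw))) as Hzero.
  exists C. split; [exact HC1|]. intros t Ht.
  assert (HtC : 0 < t / C) by (apply Rdiv_lt_0_compat; lra).
  assert (HCt : 0 < C / t) by (apply Rdiv_lt_0_compat; lra).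
  assert (L3 : omega_star omega t <= C * omega_M (fun k => W omega x k / INR (fact k)) (C / t) + C).
  { unfold omega_star. apply Rsup_lub. exists (omega 0 - 0 * t); exists 0; split; auto; lra.
    intros y [s [Hs ->]].
    pose proof (omm_nonneg omega Hw Ho x (C / t) Hx HCt) as Hm.
    destruct (Req_dec s 0) as [->|Hs0].
    - rewrite Hzero by lra. nra.
    - pose proof (line3_inner omega Hw Ho x C t s Hx HC2 Ht ltac:(lra)) as H1.
      specialize (HD s Hs).
      assert (H2 := Rmult_le_compat_l (2 * x) _ _ ltac:(lra) H1).
      replace (2 * x * (s * t / (2 * x) + omega_M (fun k => W omega x k / INR (fact k)) (C / t)))
        with (s * t + 2 * x * omega_M (fun k => W omega x k / INR (fact k)) (C / t)) in H2 by (field; lra).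
      assert (2 * x * omega_M (fun k => W omega x k / INR (fact k)) (C / t)
              <= C * omega_M (fun k => W omega x k / INR (fact k)) (C / t)) by (apply Rmult_le_compat_r; lra).
      lra. }
  split; [|split; [|split; [exact L3|split]]].
  -
    unfold omega_star. apply Rsup_lub. exists (omega 0 - 0 * t); exists 0; split; auto; lra.
    intros y [s [Hs ->]].
    pose proof (oM_nonneg omega Hw x s Hx Hs).
    pose proof (oMs_ge omega Hw Ho x (t / C) s Hx HtC Hs) as H1.
    assert (H2 := Rmult_le_compat_l C _ _ ltac:(lra) H1).
    replace (C * (omega_M (W omega x) s - s * (t / C))) with (C * omega_M (W omega x) s - s * t) in H2
      by (field; lra).
    specialize (HD s Hs).
    assert (2 * x * omega_M (W omega x) s <= C * omega_M (W omega x) s) by (apply Rmult_le_compat_r; lra).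
    lra.
  -
    unfold omega_M_star. apply Rsup_lub. exists (omega_M (W omega x) 0 - 0 * t); exists 0; split; auto; lra.
    intros y [s [Hs ->]].
    pose proof (oM_le omega Hw x s Hx Hs).
    pose proof (om_nonneg omega Hw s Hs).
    pose proof (os_ge omega Hw Ho (t / C) s HtC Hs) as H1.
    assert (H2 := Rmult_le_compat_l C _ _ ltac:(lra) H1).
    replace (C * (omega s - s * (t / C))) with (C * omega s - s * t) in H2 by (field; lra).
    assert (omega s / x <= C * omega s).
    { unfold Rdiv. rewrite Rmult_comm. apply Rmult_le_compat_r; lra. }
    lra.
  -
    assert (Htau : 0 < / (exp 1 * C * t)).
    { apply Rinv_0_lt_compat. pose proof (exp_pos 1). apply Rmult_lt_0_compat; [|lra]. nra. }
    pose proof (os_nonneg omega Hw Ho _ Htau) as HO.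
    unfold omega_M at 1. apply Rsup_lub. exists (ln (t ^ 0 / (W omega x 0 / INR (fact 0)))); eauto.
    intros y [k ->].
    assert (H1 : ln (t ^ k / (W omega x k / INR (fact k))) <= omega_star omega (/ (exp 1 * C * t)) / x).
    { apply om_elem_le; auto. pose proof (exp_pos 1).
      replace (exp 1 * t * / (exp 1 * C * t)) with (/ C) by (field; lra).
      apply (Rmult_le_reg_l C); [lra|]. rewrite Rinv_r; lra. }
    assert (omega_star omega (/ (exp 1 * C * t)) / x <= C * omega_star omega (/ (exp 1 * C * t))).
    { unfold Rdiv. rewrite Rmult_comm. apply Rmult_le_compat_r; lra. }
    cbv beta. lra.
  -
    destruct (h_lemma omega Hw Ho x (t / C) Hx HtC) as [Hh1 Hh2].
    replace (/ (t / C)) with (C / t) in Hh2 by (field; lra).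
    unfold Rpower. apply exp_le'.
    rewrite ln_div2; [|apply exp_pos|exact Hh1]. rewrite ln_exp.
    assert (C * omega_M (fun k => W omega x k / INR (fact k)) (C / t)
            <= C * - ln (h_fun (fun k => W omega x k / INR (fact k)) (t / C)))
      by (apply Rmult_le_compat_l; lra).
    lra.
Qed.
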